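(* Let $r>0$ and let $n\geq 2$ be an integer. Consider the one-parameter family of scalar ODEs $$\frac{dx}{dt}=f(x,a)=a\frac{x^n}{1+x^n}-x+r,\qquad x\in[0,\infty),$$ with bifurcation parameter $a>0$. Let $a_{c,1}<a_{c,2}$ be the values of $a$ at which the line $x\mapsto x-r$ is tangent to the curve $x\mapsto a\frac{x^n}{1+x^n}$, i.e. for which the system $f(x,a)=0$, $\frac{\partial f}{\partial x}(x,a)=0$ has a solution $x>0$. For $a=a_{c,j}$ the system has exactly two equilibria, denoted $0<\bar x_1(a_{c,j})<\bar x_2(a_{c,j})$. Suppose that $a_{c,j}\neq \frac{4n}{n^2-1}\left(\frac{n-1}{n+1}\right)^{1/n}$ for $j=1,2$. Then the system undergoes fold (saddle-node) bifurcations at the critical points $(\bar x_2(a_{c,1}),a_{c,1})$ and $(\bar x_1(a_{c,2}),a_{c,2})$; consequently, near each critical point the system can be mapped to the normal form $\frac{dz}{dt}=\beta\pm z^2$, where $z=x-\bar x_i$ (with $\bar x_i$ the critical equilibrium) and $\beta\in\mathbb{R}$ is proportional to $a-a_{c,j}$.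
   Context: A fold bifurcation at $(x^*,a^* )$ of a scalar system $\dot x=f(x,a)$ is characterised by $f(x^*,a^* )=0$, $f_x(x^*,a^* )=0$ together with the nondegeneracy conditions $f_a(x^*,a^* )\neq 0$ and $f_{xx}(x^*,a^* )\neq 0$, under which the system is locally topologically equivalent to the normal form $\dot z=\beta\pm z^2$. *)

(* Defs.v *)
From Stdlib Require Import Reals.
From Coquelicot Require Import Coquelicot.
Open Scope R_scope.

Definition hill_f (r : R) (n : nat) (x a : R) : R :=
  a * (x ^ n / (1 + x ^ n)) - x + r.

Definition fold_bifurcation (f : R -> R -> R) (xs as_ : R) : Prop :=
  f xs as_ = 0 /\
  is_derive (fun y => f y as_) xs 0 /\
  (exists fa, is_derive (fun b => f xs b) as_ fa /\ fa <> 0) /\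
  (exists fxx, is_derive (fun y => Derive (fun z => f z as_) y) xs fxx /\ fxx <> 0).

Definition tangency (f : R -> R -> R) (a : R) : Prop :=
  exists x, 0 < x /\ f x a = 0 /\ is_derive (fun y => f y a) x 0.

Definition exactly_two_equilibria (f : R -> R -> R) (a x1 x2 : R) : Prop :=
  0 < x1 < x2 /\ forall x, 0 <= x -> (f x a = 0 <-> x = x1 \/ x = x2).

Definition exceptional_a (n : nat) : R :=
  4 * INR n / (INR n ^ 2 - 1) * Rpower ((INR n - 1) / (INR n + 1)) (/ INR n).

(* Main.v *)
Require Import Defs.
From Stdlib Require Import Reals Lra Lia.
From Coquelicot Require Import Coquelicot.
Open Scope R_scope.

Lemma pow_lt_S (k : nat) (x y : R) : 0 <= x < y -> x ^ S k < y ^ S k.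
Proof.
  intros [h0 h1]. induction k as [|k IH]; simpl; [lra|].
  simpl in IH. assert (0 <= x * x ^ k) by (apply Rmult_le_pos; [lra| apply pow_le; lra]).
  apply Rle_lt_trans with (x * (y * y ^ k)).
  - apply Rmult_le_compat_l; lra.
  - apply Rmult_lt_compat_r; lra.
Qed.

Definition gg m x := x ^ S (S m) / (1 + x ^ S (S m)).
Definition dg m x := INR (S (S m)) * x ^ S m / (1 + x ^ S (S m)) ^ 2.
Definition ddg m x := INR (S (S m)) * x ^ m * (INR (S m) - INR (S (S (S m))) * x ^ S (S m)) / (1 + x ^ S (S m)) ^ 3.
Definition phi m x := x - x * (1 + x ^ S (S m)) / INR (S (S m)).
Definition dphi m x := (INR (S m) - INR (S (S (S m))) * x ^ S (S m)) / INR (S (S m)).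

Lemma INR_SS m : INR (S (S m)) = INR m + 2.
Proof. rewrite !S_INR; lra. Qed.
Lemma INR_SSS m : INR (S (S (S m))) = INR m + 3.
Proof. rewrite !S_INR; lra. Qed.

Lemma d_hill m r a x : 0 <= x ->
  is_derive (fun y => a * (y ^ S (S m) / (1 + y ^ S (S m))) - y + r) x (a * dg m x - 1).
Proof.
  intros hx. assert (hp : 0 <= x ^ m) by (apply pow_le; lra).
  assert (0 <= x * (x * x ^ m)) by (apply Rmult_le_pos; [lra|apply Rmult_le_pos; lra]).
  auto_derive.
  - simpl. lra.
  - unfold dg. change (match m with 0%nat => 1 | S _ => INR m + 1 end + 1) with (INR (S (S m))).
    simpl. field. lra.
Qed.

Lemma d_dg m x : 0 < x -> is_derive (dg m) x (ddg m x).
Proof.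
  intros hx. assert (hp : 0 < x ^ m) by (apply pow_lt; lra).
  unfold dg. auto_derive.
  - simpl. nra.
  - unfold ddg. simpl.
    set (M := match m with 0%nat => 1 | S _ => INR m + 1 end).
    field. nra.
Qed.

Lemma d_phi m (x : R) : is_derive (phi m) x (dphi m x).
Proof.
  unfold phi. auto_derive; [exact I|].
  - unfold dphi. simpl.
    set (M := match m with 0%nat => 1 | S _ => INR m + 1 end).
    assert (HM : M = INR m + 1) by (unfold M; destruct m; simpl; lra).
    pose proof (pos_INR m).
    assert (M + 1 + 1 <> 0) by lra.
    field. lra.
Qed.


Lemma mono_inc (F F' : R -> R) u v : u < v ->
  (forall c, u <= c <= v -> is_derive F c (F' c)) ->
  (forall c, u < c < v -> 0 < F' c) -> F u < F v.
Proof.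
  intros huv hd hp.
  destruct (MVT_cor2 F F' u v huv) as [c [hc1 hc2]].
  - intros c hc. apply is_derive_Reals. auto.
  - specialize (hp c hc2). nra.
Qed.

Lemma mono_dec (F F' : R -> R) u v : u < v ->
  (forall c, u <= c <= v -> is_derive F c (F' c)) ->
  (forall c, u < c < v -> F' c < 0) -> F v < F u.
Proof.
  intros huv hd hp.
  destruct (MVT_cor2 F F' u v huv) as [c [hc1 hc2]].
  - intros c hc. apply is_derive_Reals. auto.
  - specialize (hp c hc2). nra.
Qed.

Lemma mono_weak (F F' : R -> R) u v : u <= v ->
  (forall c, u <= c <= v -> is_derive F c (F' c)) ->
  (forall c, u < c < v -> 0 <= F' c) -> F u <= F v.
Proof.
  intros huv hd hp. destruct (Req_dec u v) as [->|hne]; [lra|].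
  destruct (MVT_cor2 F F' u v) as [c [hc1 hc2]]; [lra| |].
  - intros c hc. apply is_derive_Reals. auto.
  - specialize (hp c hc2). nra.
Qed.

Section P.
Variable m : nat.
Let N := INR (S (S m)).
Definition qq := INR (S m) / INR (S (S (S m))).
Definition pp := Rpower qq (/ INR (S (S m))).

Lemma N_pos : 2 <= INR (S (S m)).
Proof. rewrite INR_SS. pose proof (pos_INR m). lra. Qed.

Lemma qq_pos : 0 < qq.
Proof. unfold qq. rewrite INR_SSS, S_INR. pose proof (pos_INR m).
  apply Rdiv_lt_0_compat; lra. Qed.

Lemma pp_pos : 0 < pp.
Proof. unfold pp, Rpower. apply exp_pos. Qed.

Lemma pp_pow : pp ^ S (S m) = qq.
Proof.
  rewrite <- Rpower_pow by apply pp_pos. unfold pp. rewrite Rpower_mult.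
  rewrite Rinv_l. apply Rpower_1, qq_pos. pose proof N_pos. lra.
Qed.

Lemma bracket_pos x : 0 <= x < pp -> 0 < INR (S m) - INR (S (S (S m))) * x ^ S (S m).
Proof.
  intros hx. pose proof (pow_lt_S (S m) x pp hx). rewrite pp_pow in H.
  unfold qq in H. assert (0 < INR (S (S (S m)))) by (rewrite INR_SSS; pose proof (pos_INR m); lra).
  apply Rmult_lt_compat_l with (r := INR (S (S (S m)))) in H; [|lra].
  field_simplify in H; lra.
Qed.

Lemma bracket_neg x : pp < x -> INR (S m) - INR (S (S (S m))) * x ^ S (S m) < 0.
Proof.
  intros hx. pose proof pp_pos. pose proof (pow_lt_S (S m) pp x (conj (Rlt_le _ _ H) hx)). rewrite pp_pow in H0.
  unfold qq in H0. assert (0 < INR (S (S (S m)))) by (rewrite INR_SSS; pose proof (pos_INR m); lra).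
  apply Rmult_lt_compat_l with (r := INR (S (S (S m)))) in H0; [|lra].
  field_simplify in H0; lra.
Qed.

Lemma ddg_pos x : 0 < x < pp -> 0 < ddg m x.
Proof.
  intros hx. unfold ddg. pose proof (bracket_pos x (conj (Rlt_le _ _ (proj1 hx)) (proj2 hx))).
  pose proof N_pos. assert (0 < x ^ m) by (apply pow_lt; lra).
  assert (0 < x ^ S (S m)) by (apply pow_lt; lra).
  apply Rdiv_lt_0_compat; [|apply pow_lt; lra].
  repeat apply Rmult_lt_0_compat; lra.
Qed.

Lemma ddg_neg x : pp < x -> ddg m x < 0.
Proof.
  intros hx. unfold ddg. pose proof (bracket_neg x hx). pose proof pp_pos.
  pose proof N_pos. assert (0 < x ^ m) by (apply pow_lt; lra).
  assert (0 < x ^ S (S m)) by (apply pow_lt; lra).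
  assert (0 < (1 + x ^ S (S m)) ^ 3) by (apply pow_lt; lra).
  unfold Rdiv. assert (0 < / (1 + x ^ S (S m)) ^ 3) by (apply Rinv_0_lt_compat; lra).
  assert (0 < INR (S (S m)) * x ^ m) by (apply Rmult_lt_0_compat; lra).
  set (A := INR (S (S m)) * x ^ m) in *. set (B := INR (S m) - INR (S (S (S m))) * x ^ S (S m)) in *.
  set (C := / (1 + x ^ S (S m)) ^ 3) in *.
  assert (A * B < 0) by nra. nra.
Qed.

Lemma dg_inc x y : 0 < x -> x < y -> y <= pp -> dg m x < dg m y.
Proof.
  intros. apply mono_inc with (ddg m); auto.
  - intros c hc. apply d_dg. lra.
  - intros c hc. apply ddg_pos. lra.
Qed.

Lemma dg_dec x y : pp <= x -> x < y -> dg m y < dg m x.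
Proof.
  intros. pose proof pp_pos. apply mono_dec with (ddg m); auto.
  - intros c hc. apply d_dg. lra.
  - intros c hc. apply ddg_neg. lra.
Qed.

Lemma phi_inc x y : 0 <= x -> x < y -> y <= pp -> phi m x < phi m y.
Proof.
  intros. apply mono_inc with (dphi m); auto.
  - intros c hc. apply d_phi.
  - intros c hc. unfold dphi. apply Rdiv_lt_0_compat; [apply bracket_pos; lra| pose proof N_pos; lra].
Qed.

Lemma phi_dec x y : pp <= x -> x < y -> phi m y < phi m x.
Proof.
  intros. apply mono_dec with (dphi m); auto.
  - intros c hc. apply d_phi.
  - intros c hc. unfold dphi. pose proof N_pos. pose proof (bracket_neg c ltac:(lra)).
    unfold Rdiv. assert (0 < / INR (S (S m))) by (apply Rinv_0_lt_compat; lra). nra.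
Qed.
End P.

Section H.
Variables (m : nat) (r : R).
Hypothesis hr : 0 < r.
Let h (x a : R) := hill_f r (S (S m)) x a.

Lemma h_der a x : 0 <= x -> is_derive (fun y => hill_f r (S (S m)) y a) x (a * dg m x - 1).
Proof. intros hx. unfold hill_f. apply d_hill; auto. Qed.

Lemma h_cont a x : 0 <= x -> continuity_pt (fun y => hill_f r (S (S m)) y a) x.
Proof.
  intros hx. apply derivable_continuous_pt. exists (a * dg m x - 1).
  apply is_derive_Reals, h_der. auto.
Qed.

Lemma h_zero a : hill_f r (S (S m)) 0 a = r.
Proof. unfold hill_f. simpl. field_simplify; lra. Qed.

Lemma h_big a x : 0 < a -> a + r < x -> hill_f r (S (S m)) x a < 0.
Proof.
  intros ha hx. unfold hill_f. assert (0 <= x ^ S (S m)) by (apply pow_le; lra).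
  assert (x ^ S (S m) / (1 + x ^ S (S m)) < 1).
  { apply Rmult_lt_reg_r with (1 + x ^ S (S m)); [lra|].
    unfold Rdiv. rewrite Rmult_assoc, Rinv_l by lra. lra. }
  nra.
Qed.

Lemma noroot_before a x1 x2 y : exactly_two_equilibria (hill_f r (S (S m))) a x1 x2 ->
  0 <= y -> y < x1 -> hill_f r (S (S m)) y a < 0 -> False.
Proof.
  intros [[h1 h2] he] hy0 hy1 hyn.
  destruct (Req_dec y 0) as [->|hy]. { rewrite h_zero in hyn. lra. }
  destruct (Ranalysis5.IVT_interv (fun z => - hill_f r (S (S m)) z a) 0 y) as [z [hz1 hz2]].
  - intros c hc. apply continuity_pt_opp. apply h_cont. lra.
  - lra.
  - rewrite h_zero. lra.
  - lra.
  - assert (hill_f r (S (S m)) z a = 0) by lra.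
    apply he in H; [|lra]. lra.
Qed.

Lemma noroot_after a x1 x2 y : 0 < a -> exactly_two_equilibria (hill_f r (S (S m))) a x1 x2 ->
  x2 < y -> 0 < hill_f r (S (S m)) y a -> False.
Proof.
  intros ha [[h1 h2] he] hy1 hyp.
  destruct (Ranalysis5.IVT_interv (fun z => - hill_f r (S (S m)) z a) y (a + r + y + 1)) as [z [hz1 hz2]].
  - intros c hc. apply continuity_pt_opp. apply h_cont. lra.
  - lra.
  - lra.
  - pose proof (h_big a (a + r + y + 1) ha ltac:(lra)). lra.
  - assert (hill_f r (S (S m)) z a = 0) by lra.
    apply he in H; [|lra]. lra.
Qed.

Lemma h_mono a u v : 0 <= u -> u <= v -> (forall c, u < c < v -> 1 <= a * dg m c) ->
  hill_f r (S (S m)) u a <= hill_f r (S (S m)) v a.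
Proof.
  intros hu huv hc.
  apply mono_weak with (F := fun y => hill_f r (S (S m)) y a) (F' := fun c => a * dg m c - 1); auto.
  - intros c hc'. apply h_der. lra.
  - intros c hc'. specialize (hc c hc'). lra.
Qed.

Lemma tang_facts a x : 0 < x -> hill_f r (S (S m)) x a = 0 ->
  is_derive (fun y => hill_f r (S (S m)) y a) x 0 -> a * dg m x = 1 /\ phi m x = r.
Proof.
  intros hx h0 hd.
  assert (E : a * dg m x - 1 = 0).
  { apply is_derive_unique in hd. rewrite <- hd. symmetry. apply is_derive_unique, h_der. lra. }
  split; [lra|].
  unfold hill_f in h0. unfold dg, phi in *.
  assert (X : x ^ S (S m) = x * x ^ S m) by reflexivity. rewrite X in *.
  assert (0 < x ^ S m) by (apply pow_lt; lra).
  pose proof (N_pos m).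
  set (P := x ^ S m) in *. set (N := INR (S (S m))) in *.
  assert (0 < x * P) by (apply Rmult_lt_0_compat; lra).
  assert (E1 : a * (N * P / (1 + x * P) ^ 2) = 1) by lra.
  assert (E2 : a * (N * P) = (1 + x * P) ^ 2).
  { transitivity (a * (N * P / (1 + x * P) ^ 2) * (1 + x * P) ^ 2).
    field. lra. rewrite E1. ring. }
  assert (K : a * (x * P / (1 + x * P)) = x * (1 + x * P) / N).
  { transitivity (x * (a * (N * P)) / (N * (1 + x * P))).
    field. split; lra. rewrite E2. field. lra. }
  lra.
Qed.
End H.

Lemma exc_lemma m a x : 0 < x -> a * dg m x = 1 -> x = pp m -> a = exceptional_a (S (S m)).
Proof.
  intros hx E hxp.
  assert (Q : x ^ S (S m) = qq m) by (rewrite hxp; apply pp_pow).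
  unfold exceptional_a.
  assert (Hq : (INR (S (S m)) - 1) / (INR (S (S m)) + 1) = qq m).
  { unfold qq. rewrite INR_SS, INR_SSS, S_INR. pose proof (pos_INR m). field. lra. }
  rewrite Hq. fold (pp m). rewrite <- hxp.
  rewrite <- Hq in Q.
  pose proof (N_pos m).
  unfold dg in E.
  assert (X : x ^ S (S m) = x * x ^ S m) by reflexivity. rewrite X in *.
  assert (0 < x ^ S m) by (apply pow_lt; lra).
  set (P := x ^ S m) in *. set (N := INR (S (S m))) in *.
  assert (Q' : x * P = (N - 1) / (N + 1)) by (rewrite Q; field; lra).
  assert (E2 : a * (N * P) = (1 + x * P) ^ 2).
  { transitivity (a * (N * P / (1 + x * P) ^ 2) * (1 + x * P) ^ 2).
    field. rewrite Q'. intro. assert (N-1 >= 0) by lra.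
    assert (0 < (N - 1) / (N + 1) + 1) by (assert (0 <= (N-1)/(N+1)) by (apply Rdiv_le_0_compat; lra); lra). lra.
    rewrite E. ring. }
  rewrite Q' in E2.
  assert (NP : N * P <> 0) by nra.
  apply Rmult_eq_reg_r with (N * P); auto.
  rewrite E2.
  transitivity (4 * N * N * (x * P) / (N ^ 2 - 1)).
  - rewrite Q'. field. split; nra.
  - field. nra.
Qed.

Lemma dg_pos m x : 0 < x -> 0 < dg m x.
Proof.
  intros hx. unfold dg. pose proof (N_pos m).
  assert (0 < x ^ S m) by (apply pow_lt; lra). assert (0 < x ^ S (S m)) by (apply pow_lt; lra).
  apply Rdiv_lt_0_compat; [nra| apply pow_lt; lra].
Qed.

Lemma R1 m r a x1 x2 : 0 < r -> 0 < a -> exactly_two_equilibria (hill_f r (S (S m))) a x1 x2 ->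
  a * dg m x1 = 1 -> x1 <> pp m -> x1 < pp m.
Proof.
  intros hr ha he E hne. pose proof he as [[h1 h2] hiff].
  destruct (Rlt_or_le x1 (pp m)) as [|hle]; auto. exfalso.
  pose proof (pp_pos m).
  assert (hl : pp m < x1) by lra.
  assert (hm : hill_f r (S (S m)) (pp m) a <= hill_f r (S (S m)) x1 a).
  { apply h_mono; try lra. intros c hc. pose proof (dg_dec m c x1 ltac:(lra) ltac:(lra)).
    pose proof (Rmult_lt_compat_l a _ _ ha H0). lra. }
  assert (hz : hill_f r (S (S m)) x1 a = 0) by (apply hiff; lra).
  assert (hn : hill_f r (S (S m)) (pp m) a <> 0).
  { intro hc. apply hiff in hc; lra. }
  apply (noroot_before m r hr a x1 x2 (pp m)); auto; lra.
Qed.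

Lemma R2 m r a x1 x2 : 0 < r -> 0 < a -> exactly_two_equilibria (hill_f r (S (S m))) a x1 x2 ->
  a * dg m x2 = 1 -> x2 <> pp m -> pp m < x2.
Proof.
  intros hr ha he E hne. pose proof he as [[h1 h2] hiff].
  destruct (Rlt_or_le (pp m) x2) as [|hle]; auto. exfalso.
  pose proof (pp_pos m).
  assert (hl : x2 < pp m) by lra.
  assert (hm : hill_f r (S (S m)) x2 a <= hill_f r (S (S m)) (pp m) a).
  { apply h_mono; try lra. intros c hc. pose proof (dg_inc m x2 c ltac:(lra) ltac:(lra) ltac:(lra)).
    pose proof (Rmult_lt_compat_l a _ _ ha H0). lra. }
  assert (hz : hill_f r (S (S m)) x2 a = 0) by (apply hiff; lra).
  assert (hn : hill_f r (S (S m)) (pp m) a <> 0).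
  { intro hc. apply hiff in hc; lra. }
  apply (noroot_after m r hr a x1 x2 (pp m)); auto; lra.
Qed.

Lemma fold_lemma m r a t : 0 < a -> 0 < t -> hill_f r (S (S m)) t a = 0 ->
  is_derive (fun y => hill_f r (S (S m)) y a) t 0 -> a <> exceptional_a (S (S m)) ->
  fold_bifurcation (hill_f r (S (S m))) t a.
Proof.
  intros ha ht h0 hd hexc.
  destruct (tang_facts m r a t ht h0 hd) as [E _].
  split; [auto|]. split; [auto|]. split.
  - exists (gg m t). split.
    + unfold hill_f. auto_derive; [exact I|]. unfold gg. simpl. lra.
    + unfold gg. assert (0 < t ^ S (S m)) by (apply pow_lt; lra).
      apply Rgt_not_eq, Rdiv_lt_0_compat; lra.
  - exists (a * ddg m t). split.
    + apply is_derive_ext_loc with (f := fun y => a * dg m y - 1).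
      * apply filter_imp with (P := fun y => 0 < y).
        -- intros y hy. symmetry. apply is_derive_unique, h_der. lra.
        -- apply open_gt. auto.
      * assert (Hd : is_derive (fun y => a * dg m y) t (a * ddg m t)) by (apply is_derive_scal, d_dg; auto).
        apply is_derive_Reals. replace (a * ddg m t) with (a * ddg m t - 0) by ring.
        apply (derivable_pt_lim_minus (fun y => a * dg m y) (fun _ => 1)).
        -- apply is_derive_Reals, Hd.
        -- apply derivable_pt_lim_const.
    + destruct (Rtotal_order t (pp m)) as [hl|[he|hg]].
      * pose proof (ddg_pos m t (conj ht hl)). nra.
      * exfalso. apply hexc. apply (exc_lemma m a t); auto.
      * pose proof (ddg_neg m t hg). nra.
Qed.

Lemma get_tang m r a x1 x2 : 0 < a -> tangency (hill_f r (S (S m))) a ->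
  exactly_two_equilibria (hill_f r (S (S m))) a x1 x2 ->
  exists t, (t = x1 \/ t = x2) /\ 0 < t /\ hill_f r (S (S m)) t a = 0 /\
    is_derive (fun y => hill_f r (S (S m)) y a) t 0 /\ a * dg m t = 1 /\ phi m t = r.
Proof.
  intros ha [t [ht [h0 hd]]] he. pose proof he as [_ hiff].
  destruct (tang_facts m r a t ht h0 hd) as [E1 E2].
  exists t. split; [apply hiff; [lra|auto]|]. auto.
Qed.

Theorem proposition2 (r : R) (n : nat) (ac1 ac2 : R)
  (x11 x12 x21 x22 : R)
  (hr : 0 < r) (hn : (2 <= n)%nat)
  (hac : 0 < ac1 < ac2)
  (htan : forall a, 0 < a -> (tangency (hill_f r n) a <-> a = ac1 \/ a = ac2))
  (heq1 : exactly_two_equilibria (hill_f r n) ac1 x11 x12)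
  (heq2 : exactly_two_equilibria (hill_f r n) ac2 x21 x22)
  (hne1 : ac1 <> exceptional_a n) (hne2 : ac2 <> exceptional_a n) :
  fold_bifurcation (hill_f r n) x12 ac1 /\ fold_bifurcation (hill_f r n) x21 ac2.
Proof.
  destruct n as [|[|m]]; try lia.
  assert (ha1 : 0 < ac1) by lra. assert (ha2 : 0 < ac2) by lra.
  destruct (get_tang m r ac1 x11 x12 ha1 (proj2 (htan ac1 ha1) (or_introl eq_refl)) heq1)
    as [t1 [ht1 [ht1p [h01 [hd1 [E1 P1]]]]]].
  destruct (get_tang m r ac2 x21 x22 ha2 (proj2 (htan ac2 ha2) (or_intror eq_refl)) heq2)
    as [t2 [ht2 [ht2p [h02 [hd2 [E2 P2]]]]]].
  assert (np1 : t1 <> pp m) by (intro e; apply hne1; apply (exc_lemma m ac1 t1); auto).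
  assert (np2 : t2 <> pp m) by (intro e; apply hne2; apply (exc_lemma m ac2 t2); auto).
  pose proof (dg_pos m t1 ht1p) as dp1. pose proof (dg_pos m t2 ht2p) as dp2.
  assert (tne : t1 <> t2).
  { intro e. subst t2. nra. }
  pose proof heq1 as [[a11 a12] hi1]. pose proof heq2 as [[a21 a22] hi2].
  assert (key : t1 = x12 /\ t2 = x21).
  { destruct ht1 as [e1|e1]; destruct ht2 as [e2|e2]; subst t1 t2.
    -
      exfalso.
      pose proof (R1 m r ac1 _ _ hr ha1 heq1 E1 np1).
      pose proof (R1 m r ac2 _ _ hr ha2 heq2 E2 np2).
      destruct (Rtotal_order x11 x21) as [l|[l|l]]; [|contradiction|].
      + pose proof (phi_inc m x11 x21 ltac:(lra) l ltac:(lra)). lra.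
      + pose proof (phi_inc m x21 x11 ltac:(lra) l ltac:(lra)). lra.
    -
      exfalso.
      pose proof (R1 m r ac1 _ _ hr ha1 heq1 E1 np1) as l1.
      pose proof (R2 m r ac2 _ _ hr ha2 heq2 E2 np2) as l2.
      assert (hp : 0 < hill_f r (S (S m)) x12 ac2).
      { assert (z : hill_f r (S (S m)) x12 ac1 = 0) by (apply hi1; lra).
        unfold hill_f in *. assert (0 < x12 ^ S (S m)) by (apply pow_lt; lra).
        assert (0 < x12 ^ S (S m) / (1 + x12 ^ S (S m))) by (apply Rdiv_lt_0_compat; lra).
        nra. }
      assert (le : x12 <= x22).
      { destruct (Rle_or_lt x12 x22); auto. exfalso.
        apply (noroot_after m r hr ac2 x21 x22 x12); auto. }
      assert (hm : hill_f r (S (S m)) x12 ac2 <= hill_f r (S (S m)) x22 ac2).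
      { apply h_mono; try lra. intros c hc.
        destruct (Rle_or_lt c (pp m)) as [hcp|hcp].
        - pose proof (dg_inc m x11 c ht1p ltac:(lra) hcp). nra.
        - pose proof (dg_dec m c x22 ltac:(lra) ltac:(lra)). nra. }
      lra.
    - auto.
    -
      exfalso.
      pose proof (R2 m r ac1 _ _ hr ha1 heq1 E1 np1).
      pose proof (R2 m r ac2 _ _ hr ha2 heq2 E2 np2).
      destruct (Rtotal_order x12 x22) as [l|[l|l]]; [|contradiction|].
      + pose proof (phi_dec m x12 x22 ltac:(lra) l). lra.
      + pose proof (phi_dec m x22 x12 ltac:(lra) l). lra. }
  destruct key as [-> ->].
  split; apply fold_lemma; auto.
Qed.
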